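(* Let $\Theta_n$ be a parameter space with norm $\|\cdot\|$, let ${\boldsymbol X}_n$ denote data of sample size $n$, and for $t=1,\ldots,T$ let $Q_t(\theta,{\boldsymbol X}_n)$ be random functions of $\theta\in\Theta_n$. Suppose: (B1) for each $t$, $Q_t(\theta,{\boldsymbol X}_n)$ is continuous in $\theta$, and there is a function $Q_t^*(\theta)$, continuous in $\theta$ and uniquely maximized at $\theta_*^{(t)}$; (B2) for any $\epsilon>0$, $\sup_{\theta\in\Theta_n\setminus B_t(\epsilon)}Q_t^*(\theta)$ exists, where $B_t(\epsilon)=\{\theta:\|\theta-\theta_*^{(t)}\|<\epsilon\}$, and with $\delta_t=Q_t^*(\theta_*^{(t)})-\sup_{\theta\in\Theta_n\setminus B_t(\epsilon)}Q_t^*(\theta)$ one has $\delta=\min_{1\le t\le T}\delta_t>0$; (B3) $\sup_{1\le t\le T}\sup_{\theta\in\Theta_n}|Q_t(\theta,{\boldsymbol X}_n)-Q_t^*(\theta)|\to_p0$ as $n\to\infty$; (B4) the penalty function $P_{\lambda_n}(\theta)$ is non-negative and converges to $0$ uniformly over the set $\{\theta_*^{(t)}:t=1,\ldots,T\}$ as $n\to\infty$, where $\lambda_n$ is a regularization parameter possibly depending on $n$. Let $\theta_n^{(t)}=\arg\max_{\theta\in\Theta_n}\{Q_t(\theta,{\boldsymbol X}_n)-P_{\lambda_n}(\theta)\}$. Then $\sup_{1\le t\le T}\|\theta_n^{(t)}-\theta_*^{(t)}\|\to_p0$. *)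

(* Defs.v *)
From HB Require Import structures.
From mathcomp Require Import all_boot all_order all_algebra.
From mathcomp Require Import all_classical all_reals all_analysis.
Set Implicit Arguments. Unset Strict Implicit. Unset Printing Implicit Defensive.
Import Order.TTheory GRing.Theory Num.Theory.
Import numFieldNormedType.Exports.
Local Open Scope classical_set_scope.
Local Open Scope ring_scope.

(* Convergence in (outer) probability to 0 of a sequence of possibly
   non-measurable, NONNEGATIVE (sups of norms) extended-real-valued random quantities Y n : Omega -> \bar R:
   for every eps > 0, the outer probability of [Y n >= eps] tends to 0,
   i.e. for every eta > 0, eventually the event is covered by a measurable
   set of probability at most eta. *)
Definition cvg_outer_prob0 {d} {Omega : measurableType d} {R : realType}
  (P : probability Omega R) (Y : nat -> Omega -> \bar R) : Prop :=
  forall eps : R, 0 < eps -> forall eta : R, 0 < eta ->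
    \forall n \near \oo, exists B : set Omega,
      [/\ measurable B, [set w | (eps%:E <= Y n w)%E] `<=` B & (P B <= eta%:E)%E].

(* Main.v *)
Require Import Defs.
From HB Require Import structures.
From mathcomp Require Import all_boot all_order all_algebra.
From mathcomp Require Import all_classical all_reals all_analysis.
From mathcomp Require Import lra.
Import Order.TTheory GRing.Theory Num.Theory.
Import numFieldNormedType.Exports.
Local Open Scope classical_set_scope.
Local Open Scope ring_scope.

Theorem lemma1
  (R : realType) (d : measure_display) (Omega : measurableType d)
  (P : probability Omega R)
  (V : normedModType R) (Theta : nat -> set V) (T : nat)
  (Q : nat -> 'I_T -> V -> Omega -> R)   (* Q n t theta w = Q_t(theta, X_n(w)) *)
  (Qs : 'I_T -> V -> R)                   (* Q_t^* *)
  (thetas : 'I_T -> V)                    (* theta_*^(t) *)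
  (Pen : R -> V -> R) (lam : nat -> R)    (* P_lambda(theta), lambda_n *)
  (thetan : nat -> 'I_T -> Omega -> V)    (* theta_n^(t) *)
  (* (B1) *)
  (B1_Qcont : forall n t w, {within Theta n, continuous (fun th => Q n t th w)})
  (B1_Qscont : forall t, continuous (Qs t))
  (B1_max : forall n t, Theta n (thetas t) /\
      forall th, Theta n th -> th <> thetas t -> Qs t th < Qs t (thetas t))
  (* (B2) *)
  (B2 : forall eps : R, 0 < eps -> exists2 delta : R, 0 < delta &
      forall n t,
        let S := [set Qs t th | th in Theta n `\` [set th | `|th - thetas t| < eps]] in
        S !=set0 -> has_sup S /\ delta <= Qs t (thetas t) - sup S)
  (* (B3) *)
  (B3 : cvg_outer_prob0 P (fun n w =>
      ereal_sup [set (`|Q n tth.1 tth.2 w - Qs tth.1 tth.2|)%:E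
                 | tth in [set tth : 'I_T * V | Theta n tth.2]]))
  (* (B4) *)
  (B4_nonneg : forall n th, 0 <= Pen (lam n) th)
  (B4_cvg : forall e : R, 0 < e ->
      \forall n \near \oo, forall t, `|Pen (lam n) (thetas t)| < e)
  (* theta_n^(t) is an argmax of Q_t - P_lambda_n over Theta_n *)
  (argmax : forall n t w, Theta n (thetan n t w) /\
      forall th, Theta n th ->
        Q n t th w - Pen (lam n) th <= Q n t (thetan n t w) w - Pen (lam n) (thetan n t w)) :
  cvg_outer_prob0 P (fun n w =>
      ereal_sup [set (`|thetan n t w - thetas t|)%:E | t in [set: 'I_T]]).
Proof.
move=> eps eps0 eta eta0.
have e2 : 0 < eps / 2 by rewrite divr_gt0.
have [delta d0 HB2] := B2 (eps / 2) e2.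
have d3 : 0 < delta / 3 by rewrite divr_gt0.
have H3 := B3 (delta / 3) d3 eta eta0.
have H4 := B4_cvg (delta / 3) d3.
move: H3 H4; apply: filterS2 => n [B [mB sub PB]] H4n.
exists B; split => //.
move=> w /= Hw; apply: sub => /=.
rewrite leNgt; apply/negP => Hlt.
have HQ : forall t th, Theta n th -> `|Q n t th w - Qs t th| < delta / 3.
  move=> t th Th; rewrite -lte_fin; apply: le_lt_trans Hlt.
  apply: ereal_sup_ubound => /=; by exists (t, th).
have Hall : forall t, `|thetan n t w - thetas t| < eps / 2.
  move=> t; rewrite ltNge; apply/negP => Hge.
  have [Tn Hmax] := argmax n t w.
  set th' := thetan n t w in Tn Hmax Hge.
  have [Ts _] := B1_max n t.
  set S := [set Qs t th | th in Theta n `\` [set th | `|th - thetas t| < eps / 2]].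
  have Sth : S (Qs t th') by exists th' => //; split => //=; rewrite ltNge Hge.
  have [hs hd] := HB2 n t (ex_intro _ _ Sth).
  have le1 : Qs t th' <= sup S by apply: sup_upper_bound.
  have h1 := HQ t th' Tn.
  have h2 := HQ t (thetas t) Ts.
  have h3 := H4n t.
  have h4 := Hmax (thetas t) Ts.
  have h5 := B4_nonneg n th'.
  move: h1 h2 h3; rewrite !ltr_norml => /andP[a1 a2] /andP[b1 b2] /andP[c1 c2].
  lra.
have : (ereal_sup [set (`|thetan n t w - thetas t|)%:E | t in [set: 'I_T]] <= (eps / 2)%:E)%E.
  apply: ge_ereal_sup => _ [t _ <-]; rewrite lee_fin; exact: ltW (Hall t).
move=> h; have h' : (eps%:E <= (eps / 2)%:E)%E := le_trans Hw h.
move: h'; rewrite lee_fin => h'; lra.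
Qed.
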